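(* Let $C\in\mathbb{R}^{n\times n}$ be symmetric, $\alpha>0$ and $\rho\ge\alpha\|C\|_\infty$, $\rho>0$. Let $(\tilde\sigma^k,\sigma^k,y^k)$ be generated by the ADMM-BM algorithm described in the context, with Assumption A holding. Then $\|\gamma_i^k\|\ge 1-\frac4\alpha-\frac2{\alpha^2}$ for all $i\in[n]$ and all $k\ge2$.
   Context: $\|C\|_\infty=\max_i\sum_j|C_{ij}|$. For $\sigma\in\mathbb{R}^{n\times r}$, $\sigma_i$ is its $i$-th row; $\mathcal{M}=\{\sigma\in\mathbb{R}^{n\times r}:\|\sigma_i\|=1\ \forall i\}$. ADMM-BM with parameter $\rho$: choose $\tilde\sigma^0\in\mathcal{M}$, $\sigma^0=\tilde\sigma^0$, $y^0=C\tilde\sigma^0$. For $k=0,1,\dots$: $\gamma^k=\sigma^k-\frac1\rho(y^k+C\sigma^k)$ with rows $\gamma_i^k$; $\tilde\sigma^{k+1}_i=\gamma_i^k/\|\gamma_i^k\|$; $\sigma^{k+1}=\tilde\sigma^{k+1}+\frac1\rho(y^k-C\tilde\sigma^{k+1})$; $y^{k+1}=y^k+\rho(\tilde\sigma^{k+1}-\sigma^{k+1})$. Assumption A: $\gamma_i^k\neq0$ for all $i,k$ (so the iterates are well defined). *)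

(* Defs.v *)
From HB Require Import structures.
From mathcomp Require Import all_boot all_order all_algebra.
Set Implicit Arguments. Unset Strict Implicit. Unset Printing Implicit Defensive.
Import Order.TTheory GRing.Theory Num.Theory.
Local Open Scope ring_scope.

Definition row_norm (R : rcfType) (n r : nat) (M : 'M[R]_(n, r)) (i : 'I_n) : R :=
  Num.sqrt (\sum_(j < r) M i j ^+ 2).

Definition inf_norm (R : rcfType) (n : nat) (C : 'M[R]_n) : R :=
  \big[Num.max/0]_(i < n) \sum_(j < n) `|C i j|.

Definition admm_gamma (R : rcfType) (n r : nat) (rho : R) (C : 'M[R]_n)
  (s y : 'M[R]_(n, r)) : 'M[R]_(n, r) :=
  s - rho^-1 *: (y + C *m s).

Definition row_normalize (R : rcfType) (n r : nat) (G : 'M[R]_(n, r)) : 'M[R]_(n, r) :=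
  \matrix_(i, j) (G i j / row_norm G i).

Definition on_manifold (R : rcfType) (n r : nat) (M : 'M[R]_(n, r)) : Prop :=
  forall i : 'I_n, row_norm M i = 1.

(* Main.v *)
Require Import Defs.
From HB Require Import structures.
From mathcomp Require Import all_boot all_order all_algebra.
From mathcomp Require Import ring lra.
Import Order.TTheory GRing.Theory Num.Theory.
Local Open Scope ring_scope.

Section Nrm.
Context {R : rcfType}.
Context {r : nat}.
Definition nrm (f : 'I_r -> R) := Num.sqrt (\sum_j f j ^+ 2).

Lemma nrm_ge0 f : 0 <= nrm f.
Proof. exact: sqrtr_ge0. Qed.

Lemma nrm_sq f : nrm f ^+ 2 = \sum_j f j ^+ 2.
Proof. by rewrite sqr_sqrtr // sumr_ge0 // => j _; exact: sqr_ge0. Qed.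

Lemma nrm0_eq f : nrm f = 0 -> forall j, f j = 0.
Proof.
move=> h j; have := nrm_sq f; rewrite h expr0n /= => /esym h2.
have := psumr_eq0P (fun j _ => sqr_ge0 (f j)) h2 (i:=j) isT.
by move/eqP; rewrite sqrf_eq0 => /eqP.
Qed.

Lemma cs f g : \sum_j f j * g j <= nrm f * nrm g.
Proof.
set a := nrm f; set b := nrm g.
have ha : 0 <= a by apply: nrm_ge0.
have hb : 0 <= b by apply: nrm_ge0.
have [a0|ap] := eqVneq a 0.
  rewrite a0 mul0r big1 // => j _; by rewrite (@nrm0_eq f a0 j) mul0r.
have [b0|bp] := eqVneq b 0.
  rewrite b0 mulr0 big1 // => j _; by rewrite (@nrm0_eq g b0 j) mulr0.
have abp : 0 < a * b by rewrite mulr_gt0 // lt_def ?ap ?bp.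
have key : (2 * (a * b)) * \sum_j f j * g j <= b ^+ 2 * a ^+ 2 + a ^+ 2 * b ^+ 2.
  have e1 : b ^+ 2 * a ^+ 2 + a ^+ 2 * b ^+ 2 = \sum_j (b ^+ 2 * f j ^+ 2 + a ^+ 2 * g j ^+ 2).
    by rewrite big_split /= -!mulr_sumr /a /b !nrm_sq.
  rewrite e1 mulr_sumr; apply: ler_sum => j _.
  have := sqr_ge0 (b * f j - a * g j); nra.
have : (2 * (a * b)) * \sum_j f j * g j <= (2 * (a * b)) * (a * b) by nra.
have h2 : 0 < 2 * (a * b) by nra.
by rewrite ler_pM2l.
Qed.

Lemma nrm_ext f g : f =1 g -> nrm f = nrm g.
Proof. by move=> e; rewrite /nrm; congr Num.sqrt; apply: eq_bigr => j _; rewrite e. Qed.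

Lemma nrm_add f g : nrm (fun j => f j + g j) <= nrm f + nrm g.
Proof.
have h0 : 0 <= nrm f + nrm g by rewrite addr_ge0 ?nrm_ge0.
rewrite -(ger0_norm h0) -sqrtr_sqr ler_sqrt ?sqr_ge0 //.
have e : \sum_j (f j + g j) ^+ 2 = \sum_j f j ^+ 2 + \sum_j g j ^+ 2 + 2 * \sum_j f j * g j.
  rewrite mulr_sumr -!big_split /=; apply: eq_bigr => j _; ring.
rewrite e -!nrm_sq; have := cs f g; nra.
Qed.

Lemma nrm_opp f : nrm (fun j => - f j) = nrm f.
Proof. by rewrite /nrm; congr Num.sqrt; apply: eq_bigr => j _; rewrite sqrrN. Qed.

Lemma nrm_scale c f : nrm (fun j => c * f j) = `|c| * nrm f.
Proof.
rewrite /nrm -sqrtr_sqr -sqrtrM ?sqr_ge0 // mulr_sumr; congr Num.sqrt.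
by apply: eq_bigr => j _; rewrite exprMn.
Qed.

Lemma nrm_sum m (F : 'I_m -> 'I_r -> R) :
  nrm (fun j => \sum_(l < m) F l j) <= \sum_(l < m) nrm (F l).
Proof.
elim: m F => [|m IH] F.
  rewrite big_ord0 /nrm big1 ?sqrtr0 // => j _; by rewrite big_ord0 expr0n.
rewrite big_ord_recr /=.
rewrite (@nrm_ext _ (fun j => \sum_(l < m) F (widen_ord (leqnSn m) l) j + F ord_max j)); last first.
  by move=> j; rewrite big_ord_recr.
apply: le_trans (nrm_add _ _) _; rewrite lerD2r; exact: IH.
Qed.
End Nrm.

Lemma rn_add {R : rcfType} {n r : nat} (A B : 'M[R]_(n, r)) i :
  row_norm (A + B) i <= row_norm A i + row_norm B i.
Proof.
rewrite /row_norm -[X in X <= _]/(nrm (fun j => (A + B) i j)).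
by rewrite (@nrm_ext _ _ _ ( fun j => A i j + B i j)) ?nrm_add // => j; rewrite mxE.
Qed.

Lemma rn_opp {R : rcfType} {n r : nat} (A : 'M[R]_(n, r)) i :
  row_norm (- A) i = row_norm A i.
Proof.
rewrite /row_norm -[LHS]/(nrm (fun j => (- A) i j)).
by rewrite (@nrm_ext _ _ _ ( fun j => - A i j)) ?nrm_opp // => j; rewrite mxE.
Qed.

Lemma rn_ge0 {R : rcfType} {n r : nat} (A : 'M[R]_(n, r)) i : 0 <= row_norm A i.
Proof. exact: sqrtr_ge0. Qed.

Lemma rn_mul {R : rcfType} {n r : nat} (D : 'M[R]_n) (X : 'M[R]_(n, r)) c b i :
  \sum_j `|D i j| <= c -> (forall j, row_norm X j <= b) -> 0 <= b ->
  row_norm (D *m X) i <= c * b.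
Proof.
move=> hD hX hb.
rewrite /row_norm -[X in X <= _]/(nrm (fun l => (D *m X) i l)).
rewrite (@nrm_ext _ _ _ ( fun l => \sum_j (fun j l => D i j * X j l) j l)); last first.
  by move=> l; rewrite mxE.
apply: le_trans (nrm_sum _ _) _.
apply: le_trans (_ : \sum_j `|D i j| * b <= _); last by rewrite -mulr_suml ler_wpM2r.
apply: ler_sum => j _; rewrite nrm_scale ler_wpM2l //; exact: hX.
Qed.


Theorem lemma2 (R : rcfType) (n r : nat) (C : 'M[R]_n) (alpha rho : R)
  (st s y : nat -> 'M[R]_(n, r)) :
  C^T = C ->
  0 < alpha ->
  0 < rho ->
  alpha * inf_norm C <= rho ->
  on_manifold (st 0%N) ->
  s 0%N = st 0%N ->
  y 0%N = C *m st 0%N ->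
  (forall k : nat, st k.+1 = row_normalize (admm_gamma rho C (s k) (y k))) ->
  (forall k : nat, s k.+1 = st k.+1 + rho^-1 *: (y k - C *m st k.+1)) ->
  (forall k : nat, y k.+1 = y k + rho *: (st k.+1 - s k.+1)) ->
  (* Assumption A *)
  (forall (k : nat) (i : 'I_n), row_norm (admm_gamma rho C (s k) (y k)) i != 0) ->
  forall (k : nat) (i : 'I_n), (2 <= k)%N ->
    1 - 4 / alpha - 2 / alpha ^+ 2 <= row_norm (admm_gamma rho C (s k) (y k)) i.
Proof.
move=> _ ha hr hC hM hs0 hy0 hst hs hy hA k i hk.
have rho0 : rho != 0 by rewrite gt_eqF.
have hyk : forall k, y k = C *m st k.
  elim=> [//|m IH]; rewrite hy hs.
  rewrite opprD addrA subrr add0r scalerN scalerA mulfV // scale1r.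
  by rewrite opprB addrC subrK.
have hunit : forall k j, row_norm (st k) j = 1.
  case=> [|m] j; first exact: hM.
  rewrite hst; set G := admm_gamma _ _ _ _.
  have hG := hA m j; rewrite -/G in hG.
  rewrite /row_norm.
  have -> : \sum_(l < r) row_normalize G j l ^+ 2 = (\sum_(l < r) G j l ^+ 2) / row_norm G j ^+ 2.
    rewrite mulr_suml; apply: eq_bigr => l _; by rewrite mxE exprMn exprVn.
  rewrite /row_norm sqr_sqrtr ?sumr_ge0 // ?mulfV ?sqrtr1 //; last by move=> l _; exact: sqr_ge0.
  apply: contra hG => /eqP h0; by rewrite /row_norm h0 sqrtr0.
set D := rho^-1 *: C.
have hD : forall j, \sum_l `|D j l| <= alpha^-1.
  move=> j.
  have e : \sum_l `|D j l| = rho^-1 * \sum_l `|C j l|.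
    rewrite mulr_sumr; apply: eq_bigr => l _; by rewrite mxE normrM ger0_norm ?invr_ge0 ?ltW.
  have hle : \sum_l `|C j l| <= inf_norm C by exact: (le_bigmax 0 (fun j => \sum_l `|C j l|) j).
  rewrite e ler_pdivrMl // mulrC ler_pdivlMl //.
  have h0 : 0 <= \sum_l `|C j l| by apply: sumr_ge0 => l _.
  nra.
case: k hk => [//|m] _.
set P := st m; set Q := st m.+1.
set E := P - Q.
have hsm : s m.+1 = Q + D *m E.
  by rewrite hs hyk /D /E -scalemxAl mulmxBr.
set W := D *m E - D *m Q - D *m Q - D *m (D *m E).
have lin : forall X : 'M[R]_(n, r), rho^-1 *: (C *m X) = D *m X.
  by move=> X; rewrite /D scalemxAl.
have hg : admm_gamma rho C (s m.+1) (y m.+1) = Q + W.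
  rewrite /admm_gamma hyk hsm scalerDr !lin (mulmxDr D Q (D *m E)) /W.
  by rewrite !opprD !addrA.
rewrite hg.
set c := alpha^-1.
have c0 : 0 <= c by rewrite invr_ge0 ltW.
have hE : forall j, row_norm E j <= 2.
  move=> j; apply: le_trans (rn_add P (- Q) j) _; rewrite rn_opp /P /Q !hunit; lra.
have hDE : forall j, row_norm (D *m E) j <= c * 2 by move=> j; apply: rn_mul.
have hDQ : forall j, row_norm (D *m Q) j <= c * 1 by move=> j; apply: rn_mul => // l; rewrite hunit.
have hDDE : row_norm (D *m (D *m E)) i <= c * (c * 2).
  by apply: rn_mul => //; rewrite mulr_ge0.
have hW : row_norm W i <= c * 2 + c * 1 + c * 1 + c * (c * 2).
  have t1 := rn_add (D *m E - D *m Q - D *m Q) (- (D *m (D *m E))) i.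
  have t2 := rn_add (D *m E - D *m Q) (- (D *m Q)) i.
  have t3 := rn_add (D *m E) (- (D *m Q)) i.
  rewrite !rn_opp in t1 t2 t3.
  rewrite /W; have := hDE i; have := hDQ i; lra.
have hQ : row_norm Q i <= row_norm (Q + W) i + row_norm W i.
  by rewrite -{1}(addrK W Q); apply: le_trans (rn_add _ _ _) _; rewrite rn_opp.
have e1 : 4 / alpha = 4 * c by [].
have e2 : 2 / alpha ^+ 2 = 2 * (c * c) by rewrite -exprVn expr2.
rewrite e2; move: hQ; rewrite /Q hunit; nra.
Qed.
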